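(* Let $p\colon G(J)\to D'(K)$ be a realizable puzzle. Suppose an edge of $G(J)$ colored $v$, with endpoints $\boldsymbol\alpha,\boldsymbol\alpha'$ where $\alpha_v=a$, $\alpha'_v=b$ ($a\ne b$) and $\alpha_i=\alpha'_i$ for $i\ne v$, is trivial, i.e. $p(\boldsymbol\alpha)=p(\boldsymbol\alpha')$. Then every edge parallel to it is trivial: for every $\boldsymbol\beta\in I(J)$ with $\beta_v=a$, letting $\boldsymbol\beta'$ be obtained from $\boldsymbol\beta$ by replacing the $v$-th coordinate by $b$, we have $p(\boldsymbol\beta)=p(\boldsymbol\beta')$.
   Context: Let $R\in\{\mathbb Z,\mathbb Z_2\}$; an $R$-basis of $R^n$ is a $\mathbb Z$-basis of $\mathbb Z^n$ ($R=\mathbb Z$) or a basis of $\mathbb Z_2^n$ ($R=\mathbb Z_2$). $K$ is an $(n-1)$-dimensional star-shaped simplicial sphere on $[m]$. An $R$-characteristic map over a complex with $(N-1)$-dimensional facets is a map from its vertices to $R^N$ sending each $(N-1)$-face to an $R$-basis; D-J equivalence is equality up to left multiplication by $GL_N(R)$. For a face $\sigma$, $\operatorname{proj}_\sigma\lambda$ is the characteristic map on $\operatorname{link}\sigma$ given by $w\mapsto[\lambda(w)]\in R^N/\langle\lambda(u):u\in\sigma\rangle$. For $J=(j_1,\dots,j_m)\in\mathbb Z_{>0}^m$, $K(J)$ is the complex on vertices $\{i_k:1\le i\le m,1\le k\le j_i\}$ whose minimal non-faces are $\bigcup_{i\in\tau}\{i_1,\dots,i_{j_i}\}$ for $\tau$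 a minimal non-face of $K$; $\operatorname{wed}_vK=K(J)$ with $j_v=2$, other $j_i=1$. $I(J)=\{\boldsymbol\alpha:1\le\alpha_i\le j_i\}$; $\sigma(\boldsymbol\alpha)$ is the set of all vertices of $K(J)$ except $1_{\alpha_1},\dots,m_{\alpha_m}$, a face whose link is identified with $K$ via $i_{\alpha_i}\mapsto i$. The pre-diagram $D'(K)$: vertices are D-J classes of $R$-characteristic maps over $K$; an edge colored $v$ joins $\lambda_1,\lambda_2$ iff some $R$-characteristic map $\Lambda$ over $\operatorname{wed}_vK$ has $\operatorname{proj}_{v_1}\Lambda=\lambda_1$, $\operatorname{proj}_{v_2}\Lambda=\lambda_2$ (links of $v_1,v_2$ identified with $K$ by sending the other of $v_1,v_2$ to $v$). $G(J)$ is the $1$-skeleton of $\prod_i\Delta^{j_i-1}$ with vertex set $I(J)$, edges joining vertices differing in exactly one coordinate $v$, colored $v$. A puzzle is a color-preserving graph homomorphism $G(J)\to D'(K)$; it is realizable if it equals $\boldsymbol\alpha\mapsto\operatorname{proj}_{\sigma(\boldsymbol\alpha)}\Lambda$ for some $R$-characteristic map $\Lambda$ over $K(J)$. *)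

(* Defs.v *)
From HB Require Import structures.
From Stdlib Require Import Reals.
From mathcomp Require Import all_boot all_order all_algebra.

Set Implicit Arguments.
Unset Strict Implicit.
Unset Printing Implicit Defensive.

Import GRing.Theory.

Inductive coef := CZ | CZ2.

Definition coefR (c : coef) : comUnitRingType :=
  match c with
  | CZ => GRing.ComUnitRing.clone int _
  | CZ2 => GRing.ComUnitRing.clone 'F_2 _
  end.

Definition simplicial_complex (V : finType) (K : {set {set V}}) : Prop :=
  (forall s t : {set V}, s \in K -> t \subset s -> t \in K) /\
  (forall v : V, [set v] \in K).

(* K is (n-1)-dimensional: maximal faces have n vertices. *)
Definition has_dim (V : finType) (K : {set {set V}}) (n : nat) : Prop :=
  (exists s : {set V}, s \in K /\ #|s| = n) /\ (forall s : {set V}, s \in K -> #|s| <= n).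

Definition min_nonface (V : finType) (K : {set {set V}}) (t : {set V}) : Prop :=
  t \notin K /\ (forall s : {set V}, s \proper t -> s \in K).

Definition rsum (m : nat) (f : 'I_m -> R) : R := \big[Rplus/R0]_(i < m) f i.

Definition in_hull (m n : nat) (x : 'I_m -> 'I_n -> R) (s : {set 'I_m})
    (y : 'I_n -> R) : Prop :=
  exists c : 'I_m -> R,
    (forall i, Rle R0 (c i)) /\ (forall i, i \notin s -> c i = R0) /\
    rsum c = R1 /\ (forall k, y k = rsum (fun i => Rmult (c i) (x i k))).

Definition aff_indep (m n : nat) (x : 'I_m -> 'I_n -> R) (s : {set 'I_m}) : Prop :=
  forall c : 'I_m -> R,
    (forall i, i \notin s -> c i = R0) -> rsum c = R0 ->
    (forall k, rsum (fun i => Rmult (c i) (x i k)) = R0) ->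
    forall i, c i = R0.

Definition geom_realization (m n : nat) (K : {set {set 'I_m}})
    (x : 'I_m -> 'I_n -> R) : Prop :=
  (forall s, s \in K -> aff_indep x s) /\
  (forall s t y, s \in K -> t \in K -> in_hull x s y -> in_hull x t y ->
     in_hull x (s :&: t) y).

Definition in_polyhedron (m n : nat) (K : {set {set 'I_m}})
    (x : 'I_m -> 'I_n -> R) (y : 'I_n -> R) : Prop :=
  exists s, s \in K /\ in_hull x s y.

Definition star_shaped_sphere (m n : nat) (K : {set {set 'I_m}}) : Prop :=
  exists (x : 'I_m -> 'I_n -> R) (p : 'I_n -> R),
    geom_realization K x /\
    forall d : 'I_n -> R, (exists k, d k <> R0) ->
      exists t : R, (Rle R0 t /\
         in_polyhedron K x (fun k => Rplus (p k) (Rmult t (d k)))) /\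
        forall t', Rle R0 t' ->
          in_polyhedron K x (fun k => Rplus (p k) (Rmult t' (d k))) -> t' = t.

Local Open Scope ring_scope.

Definition is_basis_on (V : finType) (Rg : comUnitRingType) (N : nat)
    (l : V -> 'rV[Rg]_N) (S : {set V}) : Prop :=
  exists f : 'I_N -> V,
    injective f /\ (forall u, u \in S <-> exists i, f i = u) /\
    (\matrix_(i < N) l (f i)) \in unitmx.

Definition char_map (V : finType) (L : {set V} -> Prop) (Rg : comUnitRingType)
    (N : nat) (l : V -> 'rV[Rg]_N) : Prop :=
  forall S : {set V}, L S -> #|S| = N -> is_basis_on l S.

(* vertices i_k of K(J): i : 'I_m, k : 'I_(J i)  (k = 0..j_i-1 stands for 1..j_i) *)
Definition VJ (m : nat) (J : 'I_m -> nat) : finType := {i : 'I_m & 'I_(J i)}.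

Definition block (m : nat) (J : 'I_m -> nat) (t : {set 'I_m}) : {set VJ J} :=
  [set u : VJ J | tag u \in t].

(* faces of K(J): subsets containing no minimal non-face of K(J) *)
Definition KJ_face (m : nat) (K : {set {set 'I_m}}) (J : 'I_m -> nat)
    (S : {set VJ J}) : Prop :=
  forall t : {set 'I_m}, min_nonface K t -> ~ (block J t \subset S).

(* dimension count: K(J) has facets of size n + sum_i (j_i - 1) *)
Definition NJ (m n : nat) (J : 'I_m -> nat) : nat :=
  (n + \sum_(i < m) (J i).-1)%N.

Definition IJ (m : nat) (J : 'I_m -> nat) : Type := forall i : 'I_m, 'I_(J i).

(* i |-> i_{alpha_i}: identification of K with link sigma(alpha) *)
Definition iota (m : nat) (J : 'I_m -> nat) (a : IJ J) (i : 'I_m) : VJ J :=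
  Tagged (fun i => 'I_(J i)) (a i).

Definition in_sigma (m : nat) (J : 'I_m -> nat) (a : IJ J) (u : VJ J) : bool :=
  tagged u != a (tag u).

(* The realizable puzzle  p(alpha) = [proj_{sigma(alpha)} Lambda]  (a D-J class
   of maps over K, via the identification iota alpha).  A map mu : [m] -> Rg^n
   belongs to this class iff mu = phi o Lambda o iota_alpha for a surjective
   linear phi : Rg^N -> Rg^n whose kernel is the span of Lambda(sigma(alpha)),
   i.e. phi is the quotient map followed by an identification with Rg^n. *)
Definition puzzle (m n : nat) (J : 'I_m -> nat) (c : coef)
    (Lam : VJ J -> 'rV[coefR c]_(NJ n J)) (a : IJ J)
    : ('I_m -> 'rV[coefR c]_n) -> Prop :=
  fun mu => exists phi : 'M[coefR c]_(NJ n J, n),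
    (forall x : 'rV[coefR c]_(NJ n J),
        x *m phi = 0 <->
        exists cf : VJ J -> coefR c,
          x = \sum_(u : VJ J | in_sigma a u) cf u *: Lam u) /\
    (forall y : 'rV[coefR c]_n, exists x, x *m phi = y) /\
    (forall i, mu i = Lam (iota a i) *m phi).

(* Main.v *)
Require Import Defs.
From HB Require Import structures.
From Stdlib Require Import Reals.
From mathcomp Require Import all_boot all_order all_algebra.
From mathcomp Require Import Rstruct.
From mathcomp Require Import ring lra zify.
From Stdlib Require Import Lia FunctionalExtensionality PropExtensionality.
Set Implicit Arguments. Unset Strict Implicit. Unset Printing Implicit Defensive.

Module Geometry.
Import GRing.Theory Num.Theory Order.TTheory.
Local Open Scope ring_scope.
Section RealLemmas.
Variable R : realFieldType.

Lemma eps_exists (I : finType) (a b : I -> R) :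
  (forall j, 0 < a j) -> exists e : R, 0 < e /\ forall j, e * `|b j| < a j.
Proof.
move=> ha.
pose S := \sum_j `|b j| / a j.
have S0 : 0 <= S by apply: sumr_ge0 => j _; rewrite divr_ge0 // ltW.
exists (1 + S)^-1; split; first by rewrite invr_gt0; lra.
move=> j.
have Sj : `|b j| / a j <= S.
  rewrite /S (bigD1 j) //= lerDl sumr_ge0 // => i _.
  by rewrite divr_ge0 // ltW.
have aj := ha j.
have : `|b j| <= a j * S.
  by rewrite -ler_pdivrMl // mulrC.
move=> H; rewrite mulrC -(ltr_pM2r (x := 1 + S)) ?mulrA -?mulrA ?mulVf; try lra.
Qed.

Lemma sumsq_gt0 (n : nat) (z : 'cV[R]_n) : z != 0 -> 0 < (z^T *m z) 0 0.
Proof.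
move=> nz; rewrite mxE.
have [k zk] : exists k, z k 0 != 0.
  apply/existsP; apply: contraR nz; rewrite negb_exists => /forallP H.
  apply/eqP/matrixP => i j; rewrite (ord1 j) mxE; exact/eqP/negbNE/H.
rewrite (bigD1 k) //= mxE.
have h1 : 0 < z k 0 * z k 0 by move: zk; case: (ltgtP (z k 0) 0) => // h _; nra.
apply: ltr_pwDl => //; apply: sumr_ge0 => i _.
by rewrite mxE -expr2 sqr_ge0.
Qed.

Definition lf (n : nat) (D : 'rV[R]_n) (h : 'cV[R]_n) : R := (D *m h) 0 0.

Lemma lfD n (D1 D2 : 'rV[R]_n) h : lf (D1 + D2) h = lf D1 h + lf D2 h.
Proof. by rewrite /lf mulmxDl mxE. Qed.
Lemma lfZ n (D : 'rV[R]_n) e h : lf (e *: D) h = e * lf D h.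
Proof. by rewrite /lf -scalemxAl mxE. Qed.

Lemma stepC (n : nat) (I : finType) (P U : pred I) (hf zf : I -> 'cV[R]_n)
    (D0 : 'rV[R]_n) :
  (forall i, P i -> U i -> lf D0 (hf i) < 0) ->
  (forall i, P i -> ~~ U i -> zf i != 0) ->
  exists D, forall i, P i -> (U i -> lf D (hf i) < 0) /\ (~~ U i -> lf D (zf i) != 0).
Proof.
move=> H0 Hz.
pose l i := if U i then hf i else zf i.
suff [D [HU Hr]] : exists D, (forall i, P i -> U i -> lf D (hf i) < 0) /\
    forall i, i \in enum I -> P i -> ~~ U i -> lf D (zf i) != 0.
  by exists D => i Pi; split; [exact: HU| apply: Hr => //; rewrite mem_enum].
elim: (enum I) => [|i r [D1 [HU1 Hr1]]]; first by exists D0.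
have [bad|good] := boolP [&& P i, ~~ U i & lf D1 (zf i) == 0]; last first.
  exists D1; split=> // j; rewrite inE => /orP[/eqP ->|jr]; last exact: Hr1.
  by move=> Pi nU; move: good; rewrite Pi nU /=.
case/and3P: bad => Pi nUi /eqP z0.
pose w := (zf i)^T.
have pos j : 0 < (if lf D1 (l j) != 0 then `|lf D1 (l j)| else 1).
  by case: ifP => // nz; rewrite normr_gt0.
have [e [e0 He]] := eps_exists (fun j => lf w (l j)) pos.
exists (D1 + e *: w); split.
- move=> j Pj Uj; rewrite lfD lfZ.
  have := He j; rewrite /l Uj.
  have := HU1 j Pj Uj => neg.
  have nz : lf D1 (hf j) != 0 by apply: contraTneq neg => ->; rewrite ltxx.
  rewrite nz (ltr0_norm neg).
  move=> H; have H2 : e * lf w (hf j) <= e * `|lf w (hf j)|.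
    by rewrite ler_pM2l // ler_norm.
  lra.
- move=> j; rewrite inE => /orP[/eqP ->|jr] Pj nUj.
    rewrite lfD lfZ z0 add0r mulf_neq0 ?gt_eqF //.
    by rewrite /lf sumsq_gt0 // Hz.
  have nz := Hr1 j jr Pj nUj.
  have := He j; rewrite /l (negbTE nUj) nz => H.
  rewrite lfD lfZ; apply/eqP => /eqP; rewrite addr_eq0 => /eqP E.
  by move: H; rewrite E normrN normrM (gtr0_norm e0) ltxx.
Qed.

End RealLemmas.

Section Geo.
Variables (m n : nat) (K : {set {set 'I_m}}) (x : 'I_m -> 'I_n -> R) (p : 'I_n -> R).
Variable v : 'I_m.

Definition Xr (i : 'I_m) : 'rV[R]_n := \row_k x i k.
Definition Pr : 'rV[R]_n := \row_k p k.

Definition hullR (s : {set 'I_m}) (Y : 'rV[R]_n) :=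
  exists c : 'I_m -> R, (forall i, 0 <= c i) /\ (forall i, i \notin s -> c i = 0) /\
    \sum_i c i = 1 /\ Y = \sum_i c i *: Xr i.

Definition inP (Y : 'rV[R]_n) := exists s, s \in K /\ hullR s Y.

Lemma in_hullE (s : {set 'I_m}) (y : 'I_n -> R) : in_hull x s y <-> hullR s (\row_k y k).
Proof.
split.
- move=> [c [c0 [cs [c1 cy]]]]; exists c; split; [|split; [|split]] => //.
    by move=> i; apply/RleP.
  by apply/rowP => k; rewrite summxE !mxE cy; apply: eq_bigr => i _; rewrite !mxE.
- move=> [c [c0 [cs [c1 cy]]]]; exists c; split; [|split; [|split]] => //.
    by move=> i; apply/RleP.
  move=> k; have := congr1 (fun M : 'rV[R]_n => M 0 k) cy.
  by rewrite summxE !mxE => ->; apply: eq_bigr => i _; rewrite !mxE.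
Qed.

Lemma rowE' (Y : 'rV[R]_n) : \row_k Y 0 k = Y.
Proof. by apply/rowP => k; rewrite mxE. Qed.

Lemma sum_enum (V : zmodType) (s : {set 'I_m}) (F : 'I_m -> V) :
  (#|s| <= n)%N -> (forall i, i \notin s -> F i = 0) ->
  \sum_i F i = \sum_(k < n) (if (k < #|s|)%N then F (nth v (enum s) k) else 0).
Proof.
move=> sn F0.
rewrite (bigID (mem s)) /= [X in _ + X]big1 ?addr0; last by move=> i /F0.
rewrite -big_enum (big_nth v) big_mkord.
rewrite (big_ord_widen n (fun j => F (nth v (enum s) j))); last by rewrite -cardE.
rewrite big_mkcond /= -cardE; done.
Qed.

Definition Gs (s : {set 'I_m}) : 'M[R]_n :=
  \matrix_(k < n) (if (k < #|s|)%N then Xr (nth v (enum s) k) - Pr else 0).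
Definition lam (s : {set 'I_m}) (c : 'I_m -> R) : 'rV[R]_n :=
  \row_(k < n) (if (k < #|s|)%N then c (nth v (enum s) k) else 0).

Lemma lamG (s : {set 'I_m}) (c : 'I_m -> R) : (#|s| <= n)%N -> (forall i, i \notin s -> c i = 0) ->
  \sum_i c i *: (Xr i - Pr) = lam s c *m Gs s.
Proof.
move=> sn c0; rewrite (sum_enum sn); last by move=> i /c0 ->; rewrite scale0r.
rewrite mulmx_sum_row; apply: eq_bigr => k _; rewrite rowK !mxE.
by case: ifP => _ //; rewrite scale0r.
Qed.

Lemma lam_sum (s : {set 'I_m}) (c : 'I_m -> R) : (#|s| <= n)%N -> (forall i, i \notin s -> c i = 0) ->
  \sum_i c i = \sum_k lam s c 0 k.
Proof.
move=> sn c0; rewrite (sum_enum sn) //; apply: eq_bigr => k _.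
by rewrite mxE.
Qed.

Lemma lam_inv (s : {set 'I_m}) (l : 'rV[R]_n) : #|s| = n ->
  exists c, (forall i, i \notin s -> c i = 0) /\
            ((forall k, 0 <= l 0 k) -> forall i, 0 <= c i) /\ lam s c = l.
Proof.
move=> sn.
exists (fun i => if i \in s then \sum_(k < n) ((index i (enum s) == k)%:R * l 0 k) else 0).
split; [|split].
- by move=> i /negbTE ->.
- move=> l0 i; case: ifP => _ //; apply: sumr_ge0 => k _.
  by apply: mulr_ge0 => //; case: eqP.
- apply/rowP => k; rewrite !mxE sn ltn_ord.
  have ks : (k < size (enum s))%N by rewrite -cardE sn.
  have -> : nth v (enum s) k \in s by rewrite -mem_enum mem_nth.
  rewrite index_uniq ?enum_uniq //.
  rewrite (bigD1 k) //= eqxx mul1r big1 ?addr0 // => j nj.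
  have -> : (k == j :> nat) = false.
    by apply/eqP => /val_inj ekj; rewrite ekj eqxx in nj.
  by rewrite mul0r.
Qed.

End Geo.

Section Geo2.
Variables (m n : nat) (K : {set {set 'I_m}}) (x : 'I_m -> 'I_n -> R) (p : 'I_n -> R).
Variable v : 'I_m.
Hypothesis HK : simplicial_complex K.
Hypothesis Hdim : has_dim K n.
Hypothesis Hgr : geom_realization K x.
Hypothesis Hray : forall d : 'I_n -> R, (exists k, d k <> R0) ->
      exists t : R, (Rle R0 t /\
         in_polyhedron K x (fun k => Rplus (p k) (Rmult t (d k)))) /\
        forall t', Rle R0 t' ->
          in_polyhedron K x (fun k => Rplus (p k) (Rmult t' (d k))) -> t' = t.

Local Notation X := (Xr x).
Local Notation P := (Pr p).
Local Notation hull := (hullR x).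
Local Notation inPK := (inP K x).

Lemma hull_inter s t Y : s \in K -> t \in K -> hull s Y -> hull t Y -> hull (s :&: t) Y.
Proof.
move=> sK tK hs ht; rewrite -(rowE' Y) -in_hullE.
by apply: Hgr.2 => //; rewrite in_hullE rowE'.
Qed.

Lemma ray (D : 'rV[R]_n) : D != 0 -> exists t, 0 <= t /\ inPK (P + t *: D) /\
   forall t', 0 <= t' -> inPK (P + t' *: D) -> t' = t.
Proof.
move=> nD.
have E t : in_polyhedron K x (fun k => Rplus (p k) (Rmult t (D 0 k))) <-> inPK (P + t *: D).
  have -> : P + t *: D = \row_k (Rplus (p k) (Rmult t (D 0 k))).
    by apply/rowP => k; rewrite !mxE.
  split; move=> [s [sK hs]]; exists s; split => //; exact/in_hullE.
have [|t [[t0 Ht] Hu]] := Hray (d := fun k => D 0 k).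
  by case/rV0Pn: nD => k /eqP nk; exists k.
exists t; split; first exact/RleP.
split; first exact/E.
by move=> t' t'0 /E; apply: Hu; apply/RleP.
Qed.

Lemma vK : [set v] \in K. Proof. exact: HK.2. Qed.

Lemma set0K : set0 \in K.
Proof. by apply: HK.1 vK _; rewrite sub0set. Qed.

Lemma n_gt0 : (0 < n)%N.
Proof. by have := Hdim.2 _ vK; rewrite cards1. Qed.

Lemma hull0 Y : ~ hull set0 Y.
Proof.
move=> [c [_ [c0 [c1 _]]]].
have : \sum_i c i = 0 by rewrite big1 // => i _; rewrite c0 ?inE.
by rewrite c1 => /eqP; rewrite oner_eq0.
Qed.

Lemma hullv u : hull [set u] (X u).
Proof.
exists (fun i => (i == u)%:R); split; [|split; [|split]].
- by move=> i; case: eqP.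
- by move=> i; rewrite inE => /negbTE ->.
- by rewrite (bigD1 u) //= eqxx big1 ?addr0 // => i /negbTE ->.
- by rewrite (bigD1 u) //= eqxx scale1r big1 ?addr0 // => i /negbTE ->; rewrite scale0r.
Qed.

Lemma hull_has s u : s \in K -> hull s (X u) -> u \in s.
Proof.
move=> sK hs; apply/negPn/negP => nus.
have := hull_inter sK (HK.2 u) hs (hullv u).
have -> : s :&: [set u] = set0.
  apply/setP => i; rewrite !inE; apply/negbTE/andP => -[iis /eqP eu].
  by rewrite -eu iis in nus.
exact: hull0.
Qed.

Lemma hull_aff s Y : hull s Y -> exists c, (forall i, 0 <= c i) /\
   (forall i, i \notin s -> c i = 0) /\ \sum_i c i = 1 /\
   Y - P = \sum_i c i *: (X i - P).
Proof.
move=> [c [c0 [cs [c1 cY]]]]; exists c; do 3!split => //.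
rewrite cY; under [RHS]eq_bigr do rewrite scalerBr.
by rewrite sumrB -scaler_suml c1 scale1r.
Qed.

Lemma aff_hull (s : {set 'I_m}) (c : 'I_m -> R) : (forall i, 0 <= c i) -> (forall i, i \notin s -> c i = 0) ->
   \sum_i c i = 1 -> hull s (P + \sum_i c i *: (X i - P)).
Proof.
move=> c0 cs c1; exists c; do 3!split => //.
under eq_bigr do rewrite scalerBr.
by rewrite sumrB -scaler_suml c1 scale1r addrC subrK.
Qed.


Local Notation G := (Gs x p v).
Local Notation lm := (lam n v).

Lemma unit_card s : s \in K -> G s \in unitmx -> #|s| = n.
Proof.
move=> sK uG; apply/eqP; rewrite eqn_leq Hdim.2 //=; rewrite leqNgt.
apply/negP => lt.
pose k := Ordinal lt.
have : row k (G s) = 0.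
  by apply/rowP => j; rewrite !mxE /= ltnn mxE.
rewrite rowE.
move=> /(congr1 (mulmx^~ (invmx (G s)))); rewrite -mulmxA mulmxV // mulmx1 mul0mx.
move=> /rowP /(_ k); rewrite !mxE eqxx /=.
by move=> /eqP; rewrite eqxx oner_eq0.
Qed.

Lemma geo_core : exists F, F \in K /\ v \in F /\ #|F| = n.
Proof.
case: (boolP [exists F : {set 'I_m}, [&& F \in K, v \in F & #|F| == n]]).
  by move=> /existsP [F /and3P [FK vF /eqP cF]]; exists F.
rewrite negb_exists => /forallP none; exfalso.
have Hnot s : s \in K -> v \in s -> #|s| != n.
  by move=> sK vs; have := none s; rewrite sK vs.
have sn s : s \in K -> (#|s| <= n)%N by move=> sK; exact: Hdim.2.
pose D0 := X v - P.
have [D00|nD0] := eqVneq D0 0.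
  have XvP : X v = P by apply/eqP; rewrite -subr_eq0 -/D0 D00.
  case: (boolP [exists u, u != v]) => [/existsP [u nuv]|alone].
    pose D := X u - P.
    have [D0'|nD] := eqVneq D 0.
      have XuP : X u = P by apply/eqP; rewrite -subr_eq0 -/D D0'.
      have hv : hull [set v] (X u) by rewrite XuP -XvP; exact: hullv.
      have := hull_inter (HK.2 u) vK (hullv u) hv.
      have -> : [set u] :&: [set v] = set0.
        apply/setP => i; rewrite !inE; apply/negbTE/andP => -[/eqP -> /eqP e].
        by rewrite e eqxx in nuv.
      by move=> /hull0.
    have [t [_ [_ Hu]]] := ray nD.
    have e0 : 0 = t.
      apply: Hu => //; exists [set v]; split; first exact: vK.
      by rewrite scale0r addr0 -XvP; exact: hullv.
    have e1 : 1 = t.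
      apply: Hu => //; exists [set u]; split; first exact: HK.2.
      by rewrite scale1r /D addrC subrK; exact: hullv.
    by move: e1; rewrite -e0 => /eqP; rewrite oner_eq0.
  have [S [SK cS]] := Hdim.1.
  have : S != set0 by rewrite -card_gt0 cS n_gt0.
  case/set0Pn => w wS.
  have wv : w = v by apply/eqP; move: alone; rewrite negb_exists => /forallP /(_ w); rewrite negbK.
  by move: (Hnot S SK); rewrite -wv wS cS eqxx => /(_ isT).
have [t0 [_ [_ Hu0]]] := ray nD0.
have Ht1 t : 0 <= t -> inPK (P + t *: D0) -> t = 1.
  move=> t0p ht; rewrite (Hu0 t) // (Hu0 1) //; exists [set v]; split; first exact: vK.
  by rewrite scale1r /D0 addrC subrK; exact: hullv.
have Pn : ~ inPK P.
  move=> hP; have := Ht1 0 (lexx _); rewrite scale0r addr0 => /(_ hP) /eqP.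
  by rewrite eq_sym oner_eq0.
have Uneg s : s \in K -> G s \in unitmx -> exists k, (D0 *m invmx (G s)) 0 k < 0.
  move=> sK uG; have cs := unit_card sK uG.
  have [/existsP //|] := boolP [exists k, (D0 *m invmx (G s)) 0 k < 0].
  rewrite negb_exists => /forallP allp.
  have l0 k : 0 <= (D0 *m invmx (G s)) 0 k by rewrite leNgt allp.
  set l := D0 *m invmx (G s) in l0.
  have lG : l *m G s = D0 by rewrite /l -mulmxA mulVmx // mulmx1.
  have nl : l != 0 by apply: contra nD0 => /eqP l00; rewrite -lG l00 mul0mx.
  pose L := \sum_k l 0 k.
  have L0 : 0 < L.
    rewrite lt_def sumr_ge0 // andbT; apply/eqP => L00.
    case/rV0Pn: nl => k /eqP; apply.
    exact: (psumr_eq0P (fun i _ => l0 i) L00).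
  have [c [cs0 [cp lc]]] := lam_inv v (L^-1 *: l) cs.
  have cp' : forall i, 0 <= c i.
    by apply: cp => k; rewrite mxE mulr_ge0 // invr_ge0 ltW.
  have c1 : \sum_i c i = 1.
    rewrite (lam_sum v (sn _ sK) cs0) lc.
    under eq_bigr do rewrite mxE.
    by rewrite -mulr_sumr mulVf // gt_eqF.
  have := aff_hull cp' cs0 c1.
  rewrite (lamG x p v (sn _ sK) cs0) lc -scalemxAl lG => hs.
  have Li0 : 0 <= L^-1 by rewrite invr_ge0 ltW.
  have Li := Ht1 (L^-1) Li0 (ex_intro _ s (conj sK hs)).
  move: hs; rewrite Li scale1r /D0 addrC subrK => /(hull_has sK) vs.
  by move: (Hnot s sK vs); rewrite cs eqxx.
pose U s := G s \in unitmx.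
pose colk (k : 'I_n) : 'cV[R]_n := \col_j ((j == k)%:R).
have colkE (M : 'M[R]_(1, n)) k : (M *m colk k) 0 0 = M 0 k.
  rewrite mxE (bigD1 k) //= big1 ?addr0; first by rewrite mxE eqxx mulr1.
  by move=> j nj; rewrite mxE (negbTE nj) mulr0.
pose hf s : 'cV[R]_n := if [pick k | (D0 *m invmx (G s)) 0 k < 0] is Some k
   then invmx (G s) *m colk k else 0.
pose zf s : 'cV[R]_n := if [pick k | row k (kermx (G s)^T) != 0] is Some k
   then (row k (kermx (G s)^T))^T else 0.
have hfP s : s \in K -> U s -> exists k, hf s = invmx (G s) *m colk k /\
    (D0 *m invmx (G s)) 0 k < 0.
  move=> sK Us; rewrite /hf; case: pickP => [k Hk|Hn]; first by exists k.
  by have [k Hk] := Uneg s sK Us; move: (Hn k); rewrite Hk.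
have zfP s : ~~ U s -> zf s != 0 /\ G s *m zf s = 0.
  move=> nU; rewrite /zf; case: pickP => [k Hk|Hn].
    split; first by rewrite -(inj_eq (@trmx_inj _ _ _)) trmxK trmx0.
    apply: trmx_inj; rewrite trmx_mul trmxK trmx0 -row_mul mulmx_ker row0 //.
  exfalso; have : kermx (G s)^T != 0.
    by rewrite kermx_eq0 row_free_unit unitmx_tr.
  move: (kermx (G s)^T) Hn => Km Hn.
  case/matrix0Pn => i [j nz]; move: (Hn i); rewrite /= => /negbFE /eqP ri.
  have := congr1 (fun M : 'rV[R]_n => M 0 j) ri; rewrite !mxE => E.
  by rewrite E eqxx in nz.
have H1 s : s \in K -> U s -> lf D0 (hf s) < 0.
  by move=> sK Us; have [k [-> Hk]] := hfP s sK Us; rewrite /lf mulmxA colkE.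
have H2 s : s \in K -> ~~ U s -> zf s != 0 by move=> _ /zfP [].
have [D HD] := stepC H1 H2.
have nUs0 : ~~ U set0.
  apply/negP => U0; have := unit_card set0K U0; rewrite cards0 => n0.
  by have := n_gt0; rewrite -n0.
have nD : D != 0.
  have [_ /(_ nUs0)] := HD set0 set0K.
  by apply: contra => /eqP ->; rewrite /lf mul0mx mxE.
have [t [tge0 [[s [sK hs]] _]]] := ray nD.
have [c [cp [cs0 [c1 cE]]]] := hull_aff hs.
rewrite addrC addKr (lamG x p v (sn _ sK) cs0) in cE.
have tpos : 0 < t.
  rewrite lt_def tge0 andbT; apply/eqP => tz.
  by apply: Pn; exists s; split => //; rewrite -[P]addr0 -(scale0r D) -tz.
have lam0 k : 0 <= lm s c 0 k.
  by rewrite mxE; case: ifP.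
have [Us|nUs] := boolP (U s).
  have [Hneg _] := HD s sK; have := Hneg Us.
  have [k [hk _]] := hfP s sK Us.
  have : lf (t *: D) (hf s) = lm s c 0 k.
    by rewrite hk cE /lf mulmxA colkE -mulmxA mulmxV // mulmx1.
  rewrite lfZ => E; have := lam0 k; rewrite -E => H3 H4.
  nra.
have [_ Hz] := HD s sK; have := Hz nUs.
have [_ Gz] := zfP s nUs.
have : lf (t *: D) (zf s) = 0 by rewrite cE /lf -mulmxA Gz mulmx0 mxE.
rewrite lfZ => /eqP; rewrite mulf_eq0 (gt_eqF tpos) /= => ->.
by [].
Qed.

End Geo2.

Lemma geom (m n : nat) (K : {set {set 'I_m}})
    (HK : simplicial_complex K) (Hdim : has_dim K n)
    (Hstar : star_shaped_sphere n K) (v : 'I_m) :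
  exists F, F \in K /\ v \in F /\ #|F| = n.
Proof.
case: Hstar => x [p [Hgr Hray]].
exact: (geo_core v HK Hdim Hgr Hray).
Qed.
End Geometry.

Module Algebra.
Import GRing.Theory.
Local Open Scope ring_scope.
Section Transfer.
Variables (V : finType) (Rg : comUnitRingType) (N n : nat).
Variable (Lam : V -> 'rV[Rg]_N).

Definition PZ (s : pred V) (m : nat) (io : 'I_m -> V) (mu : 'I_m -> 'rV[Rg]_n) :=
  exists phi : 'M[Rg]_(N, n),
    (forall x : 'rV[Rg]_N, x *m phi = 0 <->
        exists cf : V -> Rg, x = \sum_(u : V | s u) cf u *: Lam u) /\
    (forall y : 'rV[Rg]_n, exists x, x *m phi = y) /\
    (forall i, mu i = Lam (io i) *m phi).

Lemma ker_elt (s : pred V) (phi : 'M[Rg]_(N, n)) :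
  (forall x : 'rV[Rg]_N, x *m phi = 0 <->
        exists cf : V -> Rg, x = \sum_(u : V | s u) cf u *: Lam u) ->
  forall u, s u -> Lam u *m phi = 0.
Proof.
move=> Hk u su; apply/Hk; exists (fun w => (w == u)%:R).
rewrite (bigD1 u) //= eqxx scale1r big1 ?addr0 // => w /andP[_ /negbTE ->].
by rewrite scale0r.
Qed.

Definition fa (f : 'cV[Rg]_N) (x : 'rV[Rg]_N) : Rg := (x *m f) 0 0.

Lemma faD f x y : fa f (x + y) = fa f x + fa f y.
Proof. by rewrite /fa mulmxDl mxE. Qed.
Lemma faZ f k x : fa f (k *: x) = k * fa f x.
Proof. by rewrite /fa -scalemxAl mxE. Qed.
Lemma faB f x y : fa f (x - y) = fa f x - fa f y.
Proof. by rewrite /fa mulmxBl !mxE. Qed.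
Lemma fa_sum f (P : pred V) (F : V -> 'rV[Rg]_N) :
  fa f (\sum_(u | P u) F u) = \sum_(u | P u) fa f (F u).
Proof.
rewrite /fa; elim/big_rec2: _ => [|u y z _ <-]; first by rewrite mul0mx mxE.
by rewrite mulmxDl mxE.
Qed.

Lemma mulfa f x (Y : 'M[Rg]_(1, n)) : x *m (f *m Y) = fa f x *: Y.
Proof. by rewrite mulmxA (mx11_scalar (x *m f)) mul_scalar_mx. Qed.

Lemma transfer (s1 s2 : pred V) (A B : V) (f : 'cV[Rg]_N) (m : nat)
   (i1 i2 : 'I_m -> V) (v : 'I_m) mu :
  s1 A = false -> s1 B -> s2 A -> s2 B = false ->
  (forall u, u != A -> u != B -> s1 u = s2 u) ->
  (forall u, u != A -> u != B -> fa f (Lam u) = 0) ->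
  fa f (Lam A) + fa f (Lam B) = 0 -> fa f (Lam A) = 1 ->
  i1 v = A -> i2 v = B ->
  (forall i, i != v -> i1 i = i2 i /\ i1 i != A /\ i1 i != B) ->
  PZ s1 i1 mu -> PZ s2 i2 mu.
Proof.
move=> s1A s1B s2A s2B s12 fu fAB fA i1v i2v ioth [phi [Hk [Hs Hmu]]].
have fB : fa f (Lam B) = -1.
  by apply/eqP; rewrite -subr_eq0 opprK addrC -fA fAB.
pose phi' := phi - f *m (Lam A *m phi).
have Hphi' x : x *m phi' = x *m phi - fa f x *: (Lam A *m phi).
  by rewrite /phi' mulmxBr mulfa.
have kB : Lam B *m phi = 0 by apply: ker_elt Hk _ s1B.
have pB : Lam B *m phi' = Lam A *m phi.
  by rewrite Hphi' kB fB scaleN1r sub0r opprK.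
have kill u : s2 u -> Lam u *m phi' = 0.
  move=> s2u; rewrite Hphi'.
  have [->|nA] := eqVneq u A; first by rewrite fA scale1r subrr.
  have [eB|nB] := eqVneq u B; first by rewrite eB s2B in s2u.
  by rewrite fu // scale0r subr0 (ker_elt Hk) // s12.
exists phi'; split; [|split].
- move=> x; split.
  + move=> x0.
    pose x' := x - fa f x *: Lam A.
    have : x' *m phi = 0 by rewrite /x' mulmxBl -scalemxAl -Hphi'.
    move=> /Hk [cf ecf].
    have fx' : fa f x' = 0 by rewrite /x' faB faZ fA mulr1 subrr.
    have cfB : cf B = 0.
      move: fx'; rewrite ecf fa_sum (bigD1 B) //= big1 ?addr0.
        by rewrite faZ fB mulrN1 => /eqP; rewrite oppr_eq0 => /eqP.
      move=> u /andP[s1u nB]; rewrite faZ fu ?mulr0 //.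
      by apply: contraTneq s1u => ->; rewrite s1A.
    exists (fun u => if u == A then fa f x else cf u).
    have Ex : x = x' + fa f x *: Lam A by rewrite /x' subrK.
    rewrite {1}Ex ecf (bigD1 B) //= cfB scale0r add0r.
    rewrite [in RHS](bigD1 A) //= eqxx addrC; congr (_ + _).
    apply: eq_big => [u|u /andP[s1u _]]; last first.
      by have [eA|//] := eqVneq u A; rewrite eA s1A in s1u.
    have [->|nA] := eqVneq u A; first by rewrite s1A s2A.
    have [->|nB] := eqVneq u B; first by rewrite s1B s2B.
    by rewrite s12 // andbT.
  + move=> [cf ->]; rewrite mulmx_suml big1 // => u s2u.
    by rewrite -scalemxAl kill // scaler0.
- move=> y; have [x ex] := Hs y.
  exists (x + fa f x *: Lam B).
  by rewrite mulmxDl -scalemxAl pB Hphi' ex subrK.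
- move=> i; have [->|ni] := eqVneq i v; first by rewrite Hmu i1v i2v pB.
  have [<- [nA nB]] := ioth i ni.
  by rewrite Hmu Hphi' fu // scale0r subr0.
Qed.


Lemma getf (s1 s2 : pred V) (A B : V) (m : nat) (i1 i2 : 'I_m -> V) (v : 'I_m)
   mu (phi : 'M[Rg]_(N, n)) (g : 'cV[Rg]_n) :
  s1 B -> s2 A -> i1 v = A -> i2 v = B ->
  (forall u, u != A -> u != B ->
     (s1 u && s2 u) \/ exists i, i != v /\ u = i1 i /\ i2 i = u) ->
  (forall x : 'rV[Rg]_N, x *m phi = 0 <->
        exists cf : V -> Rg, x = \sum_(u : V | s1 u) cf u *: Lam u) ->
  (forall i, mu i = Lam (i1 i) *m phi) ->
  ((Lam A *m phi) *m g) 0 0 = 1 ->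
  PZ s2 i2 mu ->
  exists f, (forall u, u != A -> u != B -> fa f (Lam u) = 0) /\
     fa f (Lam A) + fa f (Lam B) = 0 /\ fa f (Lam A) = 1.
Proof.
move=> s1B s2A i1v i2v Hu Hk Hmu Hg [phi' [Hk' [_ Hmu']]].
exists ((phi - phi') *m g).
have E x : fa ((phi - phi') *m g) x = ((x *m phi - x *m phi') *m g) 0 0.
  by rewrite /fa mulmxA mulmxBr.
have kA' : Lam A *m phi' = 0 by apply: (ker_elt Hk') s2A.
have kB : Lam B *m phi = 0 by apply: (ker_elt Hk) s1B.
split; [|split].
- move=> u nA nB; rewrite E; case: (Hu u nA nB).
  + move=> /andP[s1u s2u].
    by rewrite (ker_elt Hk) // (ker_elt Hk') // subrr mul0mx mxE.
  + move=> [i [_ [eu e2]]].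
    have e1 : Lam u *m phi = mu i by rewrite Hmu eu.
    have e2' : Lam u *m phi' = mu i by rewrite Hmu' e2.
    by rewrite e1 e2' subrr mul0mx mxE.
- rewrite !E kA' kB subr0 sub0r mulNmx.
  have -> : Lam A *m phi = mu v by rewrite Hmu i1v.
  have -> : Lam B *m phi' = mu v by rewrite Hmu' i2v.
  by rewrite !mxE addrN.
- by rewrite E kA' subr0.
Qed.


Lemma build_phi (s : pred V) (E : {set V}) (e : 'I_N -> V) (h : 'I_n -> V) :
  injective e -> (forall u, u \in E <-> exists i, e i = u) ->
  (\matrix_(i < N) Lam (e i)) \in unitmx ->
  injective h -> (forall u, u \in E <-> (s u \/ exists k, h k = u)) ->
  (forall k, s (h k) = false) ->
  exists phi : 'M[Rg]_(N, n),
    (forall x : 'rV[Rg]_N, x *m phi = 0 <->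
        exists cf : V -> Rg, x = \sum_(u : V | s u) cf u *: Lam u) /\
    (forall y : 'rV[Rg]_n, exists x, x *m phi = y) /\
    (forall k, Lam (h k) *m phi = 'e_k).
Proof.
move=> inje HE uE injh HE2 shk.
set Em := \matrix_(i < N) Lam (e i).
pose Sel : 'M[Rg]_(N, n) := \matrix_(j, k) (e j == h k)%:R.
exists (invmx Em *m Sel).
have Le j : Lam (e j) *m (invmx Em *m Sel) = row j Sel.
  by rewrite mulmxA -{1}(rowK (fun i => Lam (e i)) j) -row_mul mulmxV // row1 -rowE.
have Ls u : s u -> Lam u *m (invmx Em *m Sel) = 0.
  move=> su; have [j ej] : exists j, e j = u by apply/HE/HE2; left.
  rewrite -ej Le; apply/rowP => k; rewrite !mxE.
  by have [eh|//] := eqVneq (e j) (h k); move: (shk k); rewrite -eh ej su.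
have Lh k : Lam (h k) *m (invmx Em *m Sel) = 'e_k.
  have [j ej] : exists j, e j = h k by apply/HE/HE2; right; exists k.
  rewrite -ej Le; apply/rowP => k'; rewrite !mxE ej eqxx /=.
  by rewrite (inj_eq injh) eq_sym.
have xE x : x = \sum_j (x *m invmx Em) 0 j *: Lam (e j).
  rewrite -{1}(mulmx1 x) -(mulVmx uE) mulmxA mulmx_sum_row.
  by apply: eq_bigr => j _; rewrite rowK.
split; [|split]; last exact: Lh.
- move=> x; split.
  + move=> x0; set c := x *m invmx Em.
    have c0 j : s (e j) = false -> c 0 j = 0.
      move=> sj; have : e j \in E by apply/HE; exists j.
      move=> /HE2 [|[k ek]]; first by rewrite sj.
      have key (c' : 'rV[Rg]_N) : (c' *m Sel) 0 k = c' 0 j.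
        rewrite mxE (bigD1 j) //= big1 ?addr0; first by rewrite mxE ek eqxx mulr1.
        by move=> j' nj; rewrite mxE ek (inj_eq inje) (negbTE nj) mulr0.
      have := congr1 (fun M : 'rV[Rg]_n => M 0 k) x0.
      by rewrite mulmxA key -/c => ->; rewrite mxE.
    exists (fun u => \sum_j (e j == u)%:R * c 0 j).
    rewrite {1}(xE x) -/c.
    under [RHS]eq_bigr do rewrite scaler_suml.
    rewrite exchange_big /=; apply: eq_bigr => j _.
    have [sj|sj] := boolP (s (e j)).
      rewrite (bigD1 (e j)) //= eqxx mul1r big1 ?addr0 // => u /andP[_ nu].
      by rewrite eq_sym (negbTE nu) mul0r scale0r.
    rewrite c0 ?(negbTE sj) // scale0r big1 // => u su.
    by rewrite mulr0 scale0r.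
  + move=> [cf ->]; rewrite mulmx_suml big1 // => u su.
    by rewrite -scalemxAl Ls // scaler0.
- move=> y; exists (\sum_k y 0 k *: Lam (h k)).
  rewrite mulmx_suml -{2}(mulmx1 y) mulmx_sum_row; apply: eq_bigr => k _.
  by rewrite -scalemxAl Lh row1.
Qed.

End Transfer.

Lemma faN (Rg : comUnitRingType) (N : nat) (f : 'cV[Rg]_N) x :
  fa (- f) x = - fa f x.
Proof. by rewrite /fa mulmxN mxE. Qed.

Section Main.
Variables (c : coef) (m n : nat) (K : {set {set 'I_m}}) (J : 'I_m -> nat).
Hypothesis HK : simplicial_complex K.
Hypothesis HJ : forall i, (0 < J i)%N.

Lemma iota_inj (al : IJ J) : injective (Defs.iota al).
Proof. by move=> i j /(congr1 tag). Qed.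

Lemma iotaE (al : IJ J) (u : VJ J) : tagged u = al (tag u) -> Defs.iota al (tag u) = u.
Proof. by case: u => i k /= ->. Qed.

Definition EJ (al : IJ J) (F : {set 'I_m}) : {set VJ J} :=
  [set u : VJ J | (tagged u != al (tag u)) || (tag u \in F)].

Lemma EJ_face (al : IJ J) (F : {set 'I_m}) : F \in K -> KJ_face K (EJ al F).
Proof.
move=> FK t [tK _] /subsetP sub.
have : ~~ (t \subset F).
  by apply: contra tK => tF; apply: HK.1 FK tF.
case/subsetPn => i it niF.
have : Defs.iota al i \in EJ al F by apply: sub; rewrite inE.
by rewrite inE /= eqxx (negbTE niF).
Qed.

Lemma EJ_card (al : IJ J) (F : {set 'I_m}) : #|F| = n -> #|EJ al F| = NJ n J.
Proof.
move=> cF.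
have EC : ~: EJ al F = Defs.iota al @: ~: F.
  apply/setP => u; rewrite !inE negb_or negbK; apply/idP/imsetP.
    by move=> /andP[/eqP e nF]; exists (tag u); rewrite ?inE // iotaE.
  by move=> [i iF ->]; rewrite /= eqxx; rewrite inE in iF.
have c1 : #|~: EJ al F| = (m - n)%N.
  rewrite EC card_imset; last exact: iota_inj.
  have := cardsC F; rewrite card_ord cF => H.
  apply/eqP; rewrite -(eqn_add2l n) subnKC; first by rewrite H.
  by rewrite -H leq_addr.
have cT : #|{: VJ J}| = \sum_(i < m) J i.
  rewrite /VJ card_tagged sumnE big_map big_enum /=.
  by apply: eq_bigr => i _; rewrite card_ord.
have cS : \sum_(i < m) J i = (\sum_(i < m) (J i).-1 + m)%N.
  rewrite -[X in (_ + X)%N](card_ord m) -sum1_card -big_split /=.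
  by apply: eq_bigr => i _; rewrite addn1 prednK.
have nm : (n <= m)%N.
  by rewrite -cF; apply: leq_trans (max_card _) _; rewrite card_ord.
have := cardsC (EJ al F); rewrite c1 cT cS /NJ => H.
lia.
Qed.

End Main.
End Algebra.
Import Algebra.
Import GRing.Theory.
Local Open Scope ring_scope.
Theorem mainTheorem7 (c : coef) (m n : nat) (K : {set {set 'I_m}})
    (HK : simplicial_complex K) (Hdim : has_dim K n)
    (Hstar : star_shaped_sphere n K)
    (J : 'I_m -> nat) (HJ : forall i, (0 < J i)%N)
    (Lam : VJ J -> 'rV[coefR c]_(NJ n J))
    (HLam : char_map (KJ_face K (J:=J)) Lam)
    (v : 'I_m) (a b : 'I_(J v)) (Hab : a <> b)
    (al al' : IJ J) (Hal : al v = a) (Hal' : al' v = b)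
    (Hoth : forall i, i <> v -> al i = al' i)
    (Htriv : puzzle Lam al = puzzle Lam al') :
  forall be be' : IJ J, be v = a -> be' v = b ->
    (forall i, i <> v -> be i = be' i) ->
    puzzle Lam be = puzzle Lam be'.
Proof.
move=> be be' Hbe Hbe' Hoth'.
have [F [FK [vF cF]]] := Geometry.geom HK Hdim Hstar v.
pose A : VJ J := Tagged (fun i => 'I_(J i)) a.
pose B : VJ J := Tagged (fun i => 'I_(J i)) b.
have nab : (a == b) = false by apply/eqP.
have nba : (b == a) = false by apply/eqP => /esym.
have [e [inje [HE uE]]] :=
  HLam (EJ al F) (EJ_face (al:=al) HK FK) (EJ_card HJ al cF).
pose h (k : 'I_n) : VJ J := Defs.iota al (enum_val (cast_ord (esym cF) k)).
have injh : injective h.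
  move=> k1 k2 /iota_inj /enum_val_inj /cast_ord_inj //.
have HE2 u : u \in EJ al F <-> (in_sigma al u \/ exists k, h k = u).
  rewrite inE; split.
    case/orP => [ns|uF]; first by left.
    have [ns|ns] := boolP (in_sigma al u); first by left.
    right; exists (cast_ord cF (enum_rank_in uF (tag u))).
    rewrite /h cast_ordK enum_rankK_in // iotaE //.
    by apply/eqP; exact: negbNE ns.
  case=> [ns|[k <-]]; first by apply/orP; left.
  apply/orP; right; rewrite /h /=.
  exact: enum_valP.
have shk k : in_sigma al (h k) = false by rewrite /in_sigma /= eqxx.
have [phi [Hk [Hs Hh]]] := build_phi (Lam:=Lam) inje HE uE injh HE2 shk.
pose mu i := Lam (Defs.iota al i) *m phi.
have P1 : puzzle Lam al mu by exists phi.
rewrite Htriv in P1.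
pose k0 := cast_ord cF (enum_rank_in vF v).
have hk0 : h k0 = A by rewrite /h cast_ordK enum_rankK_in // /Defs.iota Hal.
pose g : 'cV[coefR c]_n := \col_j (j == k0)%:R.
have [f [fu [fAB fA]]] : exists f, (forall u, u != A -> u != B -> fa f (Lam u) = 0) /\
     fa f (Lam A) + fa f (Lam B) = 0 /\ fa f (Lam A) = 1.
  apply: (getf (s1 := in_sigma al) (s2 := in_sigma al') (i1 := Defs.iota al)
     (i2 := Defs.iota al') (v := v) (mu := mu) (phi := phi) (g := g)) => //.
  - by rewrite /in_sigma /= Hal nba.
  - by rewrite /in_sigma /= Hal' nab.
  - by rewrite /Defs.iota Hal.
  - by rewrite /Defs.iota Hal'.
  - case=> i k; have [eiv|niv] := eqVneq i v.
      subst i; rewrite /A /B !eq_Tagged /= => nka nkb.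
      by left; rewrite /in_sigma /= Hal Hal' nka nkb.
    move=> _ _; have [eka|nka] := eqVneq k (al i).
      right; exists i; split=> //; rewrite /Defs.iota -Hoth; last exact/eqP.
      by rewrite eka.
    by left; rewrite /in_sigma /= -Hoth ?nka //; apply/eqP.
  - rewrite -hk0 Hh mxE (bigD1 k0) //= big1 ?addr0.
      by rewrite !mxE !eqxx mulr1.
    by move=> j nj; rewrite !mxE (negbTE nj) mul0r.
have fB : fa f (Lam B) = -1.
  by apply/eqP; rewrite -subr_eq0 opprK addrC -fA fAB.
have sA : in_sigma be A = false by rewrite /in_sigma /= Hbe eqxx.
have sB : in_sigma be B by rewrite /in_sigma /= Hbe nba.
have sA' : in_sigma be' A by rewrite /in_sigma /= Hbe' nab.
have sB' : in_sigma be' B = false by rewrite /in_sigma /= Hbe' eqxx.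
have s12 u : u != A -> u != B -> in_sigma be u = in_sigma be' u.
  case: u => i k; have [eiv|niv] := eqVneq i v.
    by subst i; rewrite /A /B !eq_Tagged /= => nka nkb; rewrite /in_sigma /= Hbe Hbe' nka nkb.
  by move=> _ _; rewrite /in_sigma /= Hoth' //; apply/eqP.
have ioth i : i != v -> Defs.iota be i = Defs.iota be' i /\
    Defs.iota be i != A /\ Defs.iota be i != B.
  move=> ni; split; first by rewrite /Defs.iota Hoth' //; apply/eqP.
  by split; apply: contra ni => /eqP/(congr1 tag) /= ->.
have i1 : Defs.iota be v = A by rewrite /Defs.iota Hbe.
have i2 : Defs.iota be' v = B by rewrite /Defs.iota Hbe'.
apply: functional_extensionality => mu'.
apply: propositional_extensionality; split.
- exact: (transfer (Lam := Lam) sA sB sA' sB' s12 fu fAB fA i1 i2 ioth).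
- apply: (transfer (Lam := Lam) (A := B) (B := A) (f := - f)
     (s1 := in_sigma be') (s2 := in_sigma be) (i1 := Defs.iota be')
     (i2 := Defs.iota be) (v := v)) => //.
  + by move=> u nB nA; rewrite s12.
  + by move=> u nB nA; rewrite faN fu // oppr0.
  + by rewrite !faN -opprD addrC fAB oppr0.
  + by rewrite faN fB opprK.
  + by move=> i ni; have [ee [nA nB]] := ioth i ni; rewrite -ee.
Qed.
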